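(* Let $k$ be a positive integer and $G$ a finite, simple, undirected, connected graph. (a) If $\mathrm{diam}(G)\in\{1,2\}$, then $O_{R,k}(G)=O_R(G)$ for all positive integers $k$. (b) For positive integers $k<k'$, the pair $(O_{R,k}(G),O_{R,k'}(G))$ belongs to $\{(\mathcal{B},\mathcal{B}),(\mathcal{N},\mathcal{N}),(\mathcal{M},\mathcal{M}),(\mathcal{B},\mathcal{N}),(\mathcal{B},\mathcal{M}),(\mathcal{N},\mathcal{M})\}$; moreover, $O_{R,k_0}(G)=O_R(G)$ for every $k_0\ge \mathrm{diam}(G)-1$.
   Context: $d(x,y)$ is the shortest-path distance in $G$, $d_k(x,y)=\min\{d(x,y),k+1\}$, and $\mathrm{diam}(G)=\max_{x,y}d(x,y)$. A set $S\subseteq V(G)$ is a distance-$k$ resolving set if for all distinct $x,y\in V(G)$ some $z\in S$ has $d_k(x,z)\neq d_k(y,z)$; it is a resolving set if the same holds with $d$ in place of $d_k$. In the Maker-Breaker distance-$k$ resolving game (MB$k$RG) on $G$, Maker and Breaker alternately select a not-yet-chosen vertex; Maker wins if his selected vertices form a distance-$k$ resolving set, Breaker wins otherwise. The $M$-game ($B$-game) is the game where Maker (Breaker) moves first. $O_{R,k}(G)=\mathcal{M}$ if Maker wins both the $M$-game and $B$-game with optimal play, $\mathcal{B}$ if Breaker wins both, and $\mathcal{N}$ if the first player wins. $O_R(G)$ is defined in the same way for the Maker-Breaker resolving game, in which Maker must form a resolving set (with respect to $d$). Outcomes are ordered $\mathcal{B}<\mathcal{N}<\mathcal{M}$. *)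

(* Defs.v *)
From mathcomp Require Import all_boot.
Set Implicit Arguments. Unset Strict Implicit. Unset Printing Implicit Defensive.

Section Graph.
Variables (T : finType) (e : rel T).

Definition simple_graph := symmetric e /\ irreflexive e.
Definition connected_graph := forall x y : T, connect e x y.

Definition walkn (n : nat) (x y : T) : bool :=
  [exists p : n.-tuple T, path e x p && (last x p == y)].

(* shortest-path distance: the least n < #|T| with a walk of length n
   (always exists in a connected graph; #|T| otherwise). *)
Definition dist (x y : T) : nat := find (fun n => walkn n x y) (iota 0 #|T|).

Definition distk (k : nat) (x y : T) : nat := minn (dist x y) k.+1.

Definition diam : nat := \max_(x : T) \max_(y : T) dist x y.

Definition resolvingb (d : T -> T -> nat) (S : {set T}) : bool :=
  [forall x, forall y, (x != y) ==> [exists z in S, d x z != d y z]].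

(* Maker–Breaker game on the vertex set: M = Maker's vertices,
   B = Breaker's vertices, makerTurn = whose move it is.  The game ends when
   all vertices are chosen; Maker wins iff his set satisfies W.
   [maker_wins W M B t n] = Maker has a winning strategy (n is fuel, >= number
   of free vertices). *)
Fixpoint maker_wins (W : pred {set T}) (M B : {set T}) (makerTurn : bool)
    (n : nat) : bool :=
  match n with
  | 0 => W M
  | n'.+1 =>
      if ~: (M :|: B) == set0 then W M
      else if makerTurn then
        [exists v in ~: (M :|: B), maker_wins W (v |: M) B false n']
      else
        [forall v in ~: (M :|: B), maker_wins W M (v |: B) true n']
  end.

Definition maker_wins_Mgame (W : pred {set T}) : bool :=
  maker_wins W set0 set0 true #|T|.
Definition maker_wins_Bgame (W : pred {set T}) : bool :=
  maker_wins W set0 set0 false #|T|.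

End Graph.

Inductive outcome := OutB | OutN | OutM.

(* Outcome: M if Maker wins both games, B if Breaker wins both,
   N otherwise (i.e. the first player wins; the remaining combination
   "second player wins both" cannot occur in a Maker-Breaker game). *)
Definition outcome_of (mM mB : bool) : outcome :=
  if mM && mB then OutM else if ~~ mM && ~~ mB then OutB else OutN.

Definition game_outcome (T : finType) (d : T -> T -> nat) : outcome :=
  outcome_of (maker_wins_Mgame (resolvingb d)) (maker_wins_Bgame (resolvingb d)).

Definition O_R (T : finType) (e : rel T) : outcome := game_outcome (dist e).
Definition O_Rk (T : finType) (e : rel T) (k : nat) : outcome :=
  game_outcome (distk e k).

(* Main.v *)
Require Import Defs.
From mathcomp Require Import all_boot.

Lemma mw_mono (T : finType) (W1 W2 : pred {set T}) :
  (forall S, W1 S -> W2 S) ->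
  forall n M B t, maker_wins W1 M B t n -> maker_wins W2 M B t n.
Proof.
move=> H; elim=> [|n IH] M B t /=; first exact: H.
case: ifP => _; first exact: H.
case: t.
- case/existsP => v /andP[Hv Hw]; apply/existsP; exists v; rewrite Hv; exact: IH.
- move/forallP => Hf; apply/forallP => v; apply/implyP => Hv; apply: IH.
  exact: (implyP (Hf v) Hv).
Qed.

Lemma res_mono (T : finType) (d1 d2 : T -> T -> nat) f S :
  (forall x y, d1 x y = f (d2 x y)) -> resolvingb d1 S -> resolvingb d2 S.
Proof.
move=> Hf /forallP H; apply/forallP=> x; apply/forallP=> y; apply/implyP=> xy.
have:= implyP (forallP (H x) y) xy.
case/existsP=> z /andP[zS dz]; apply/existsP; exists z; rewrite zS /=.
by apply: contra dz; rewrite !Hf => /eqP->.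
Qed.

Lemma out_mono (a b c d : bool) : (a -> c) -> (b -> d) ->
  let p := (outcome_of a b, outcome_of c d) in
     p = (OutB, OutB) \/ p = (OutN, OutN) \/ p = (OutM, OutM) \/
     p = (OutB, OutN) \/ p = (OutB, OutM) \/ p = (OutN, OutM).
Proof.
case: a; case: b; case: c; case: d => H1 H2 /=; rewrite /outcome_of /=;
  try (have := H1 isT; done); try (have := H2 isT; done); tauto.
Qed.

Lemma game_mono (T : finType) (d1 d2 : T -> T -> nat) f :
  (forall x y, d1 x y = f (d2 x y)) ->
  (maker_wins_Mgame (resolvingb d1) -> maker_wins_Mgame (resolvingb d2)) /\
  (maker_wins_Bgame (resolvingb d1) -> maker_wins_Bgame (resolvingb d2)).
Proof.
move=> Hf; split; apply: mw_mono => S; exact: res_mono Hf.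
Qed.

Lemma dist_diam (T : finType) (e : rel T) x y : dist e x y <= diam e.
Proof.
rewrite /diam; apply: leq_trans (@leq_bigmax _ (fun x => \max_y dist e x y) x).
exact: (@leq_bigmax _ (fun y => dist e x y) y).
Qed.

Lemma big_k (T : finType) (e : rel T) k0 : diam e - 1 <= k0 ->
  O_Rk e k0 = O_R e.
Proof.
move=> Hk.
have E : forall x y, distk e k0 x y = dist e x y.
  move=> x y; rewrite /distk; apply/minn_idPl.
  apply: (leq_trans (dist_diam _ e x y)).
  by move: Hk; rewrite leq_subLR add1n.
have [A1 B1] := @game_mono _ _ _ id E.
have [A2 B2] := @game_mono _ _ _ id (fun x y => esym (E x y)).
have eM : maker_wins_Mgame (resolvingb (distk e k0)) = maker_wins_Mgame (resolvingb (dist e)).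
  by apply/idP/idP.
have eB : maker_wins_Bgame (resolvingb (distk e k0)) = maker_wins_Bgame (resolvingb (dist e)).
  by apply/idP/idP.
by rewrite /O_Rk /O_R /game_outcome eM eB.
Qed.

Theorem corollary2p5 (T : finType) (e : rel T) :
  simple_graph e -> connected_graph e ->
  ((diam e = 1 \/ diam e = 2) -> forall k : nat, 0 < k -> O_Rk e k = O_R e) /\
  (forall k k' : nat, 0 < k -> k < k' ->
     let p := (O_Rk e k, O_Rk e k') in
     p = (OutB, OutB) \/ p = (OutN, OutN) \/ p = (OutM, OutM) \/
     p = (OutB, OutN) \/ p = (OutB, OutM) \/ p = (OutN, OutM)) /\
  (forall k0 : nat, 0 < k0 -> diam e - 1 <= k0 -> O_Rk e k0 = O_R e).
Proof.
move=> _ _; split; last split.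
- move=> Hd k Hk; apply: big_k; case: Hd => ->; by case: k Hk.
- move=> k k' _ Hkk'.
  have E : forall x y, distk e k x y = minn (distk e k' x y) k.+1.
    move=> x y; rewrite /distk -minnA; congr minn.
    by apply/esym/minn_idPr; apply: ltnW.
  have [A B] := @game_mono _ _ _ (fun n => minn n k.+1) E.
  exact: out_mono A B.
- move=> k0 _; exact: big_k.
Qed.
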